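(* For every online scheduling algorithm there exists a feasible job stream (with speed functions $f_j(t)=t-r_j$) on which the algorithm misses the due date of at least one job, i.e., some job $j$ has completion time $C_j>d_j$.
   Context: Jobs $j$ have release time $r_j$, due date $d_j>r_j$, work $w_j>0$, and speed function $f_j(t)=t-r_j$ for $t\ge r_j$. A single processor runs at most one job at a time, preemption is allowed, and running job $j$ during a set of times $S$ completes $\int_S f_j(t)\,dt$ units of its work; $C_j$ is the time at which job $j$'s work $w_j$ is completed. A job stream is feasible if there exists a schedule in which every job runs only within $[r_j,d_j]$ and completes by $d_j$. In the online setting, job $j$ (together with $w_j$ and $d_j$) becomes known to the algorithm only at time $r_j$, and the algorithm's decisions up to time $t$ may depend only on jobs released by time $t$. *)

(* Defs.v *)
From HB Require Import structures.
From mathcomp Require Import all_boot all_order all_algebra.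
From mathcomp Require Import all_classical all_reals all_analysis.
Set Implicit Arguments. Unset Strict Implicit. Unset Printing Implicit Defensive.
Import Order.TTheory GRing.Theory Num.Theory.
Local Open Scope classical_set_scope.
Local Open Scope ring_scope.

(* A job: release time r, due date d, work w.  Its speed function is
   f_j(t) = t - r_j (for t >= r_j). *)
Record job (R : realType) := Job { rel : R; due : R; wrk : R }.

Definition job_ok (R : realType) (jb : job R) : Prop :=
  rel jb < due jb /\ 0 < wrk jb.

Definition stream (R : realType) := nat -> option (job R).

Definition stream_ok (R : realType) (J : stream R) : Prop :=
  (exists N, forall n, (N <= n)%N -> J n = None) /\
  (forall n jb, J n = Some jb -> job_ok jb).

(* A (single-processor, preemptive) schedule: at time t it runs at most one job. *)
Definition schedule (R : realType) := R -> option nat.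

Definition work (R : realType) (s : schedule R) (n : nat) (jb : job R) (T : R)
  : \bar R :=
  (\int[@lebesgue_measure R]_(t in `[rel jb, T])
      (if s t == Some n then t - rel jb else 0)%:E)%E.

(* Completion time C_j: the (first) time at which the work w_j is completed;
   +oo if never completed. *)
Definition completion (R : realType) (s : schedule R) (n : nat) (jb : job R)
  : \bar R :=
  ereal_inf [set T%:E | T in [set T : R | (wrk jb)%:E <= work s n jb T]%E].

Definition sched_measurable (R : realType) (s : schedule R) : Prop :=
  forall n : nat, measurable [set t : R | s t = Some n].

Definition feasible (R : realType) (J : stream R) : Prop :=
  exists s : schedule R,
    sched_measurable s /\
    (forall t n, s t = Some n ->
       exists jb, J n = Some jb /\ rel jb <= t <= due jb) /\
    (forall n jb, J n = Some jb -> (completion s n jb <= (due jb)%:E)%E).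

Definition algorithm (R : realType) := stream R -> schedule R.

Definition released_by (R : realType) (J : stream R) (t : R) : stream R :=
  fun n => match J n with
           | Some jb => if rel jb <= t then Some jb else None
           | None => None
           end.

Definition online (R : realType) (A : algorithm R) : Prop :=
  (forall J J' t, released_by J t = released_by J' t -> A J t = A J' t) /\
  (forall J, sched_measurable (A J)) /\
  (forall J t n, A J t = Some n -> exists jb, J n = Some jb /\ rel jb <= t).

(* Main.v *)
From Pilot Require Import Defs.
From HB Require Import structures.
From mathcomp Require Import all_boot all_order all_algebra.
From mathcomp Require Import all_classical all_reals all_analysis.
From mathcomp Require Import measurable_realfun.
From mathcomp Require Import ring lra.
Import Pilot.Defs.
Set Implicit Arguments. Unset Strict Implicit. Unset Printing Implicit Defensive.
Import Order.TTheory GRing.Theory Num.Theory numFieldNormedType.Exports.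
Local Open Scope classical_set_scope.
Local Open Scope ring_scope.

Ltac split_ifs := repeat match goal with |- context [if ?b then _ else _] =>
  lazymatch b with context [if _ then _ else _] => fail
  | _ => let H := fresh "H" in case: (boolP b) => H end end.
Ltac norm_hyps := repeat match goal with
 | H : is_true (_ && _) |- _ => case/andP: H => ? ?
 | H : is_true (~~ (_ && _)) |- _ => rewrite negb_and in H
 | H : is_true (_ || _) |- _ => case/orP: H => H
 | H : is_true (~~ (_ <= _)) |- _ => rewrite -ltNge in H
 | H : is_true (~~ (_ < _)) |- _ => rewrite -leNgt in H
 | H : is_true (~~ ?b), H' : is_true ?b |- _ => by rewrite H' in H
 | H : is_true (~~ (?a == ?a)) |- _ => by rewrite eqxx in H
 | H : is_true (Some ?x == Some ?y) |- _ => by move: H => /eqP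
 end.
Ltac opt_contra := match goal with
 | H : is_true (?a == Some _), H' : is_true (?a == Some _) |- _ =>
   move/eqP: H => H; move/eqP: H' => H'; rewrite H in H'; congruence end.
Ltac pw := split_ifs; norm_hyps; try lra; try opt_contra.


Section S.
Variable R : realType.
Local Notation leb := (@lebesgue_measure R).

Definition tm (A : set R) (c t : R) : R := \1_A t * (t - c).

Lemma tmE A c t : tm A c t = if t \in A then t - c else 0.
Proof. by rewrite /tm indicE; case: (t \in A); rewrite ?mul1r ?mul0r. Qed.

Lemma mtm A c : measurable A -> measurable_fun [set: R] (EFin \o tm A c).
Proof.
move=> mA; apply/measurable_EFinP; apply: measurable_funM.
  exact: measurable_indic.
by apply: measurable_funB => //; exact: measurable_id.
Qed.

Lemma int_patch (D : set R) c :
  (\int[leb]_(x in D) (x - c)%:E = \int[leb]_x (tm D c x)%:E)%E.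
Proof.
rewrite integral_mkcond; apply: eq_integral => x _.
by rewrite patchE tmE; case: ifP.
Qed.

Lemma work_tm (s : schedule R) n jb T :
  work s n jb T =
  (\int[leb]_x (tm (`[rel jb, T] `&` [set t | s t = Some n]) (rel jb) x)%:E)%E.
Proof.
rewrite /work integral_mkcond; apply: eq_integral => x _.
rewrite patchE tmE in_setI.
have -> : (x \in [set t | s t = Some n]) = (s x == Some n).
  by apply/idP/eqP => [/set_mem|/mem_set].
by case: (x \in _) => //=; case: (s x == Some n).
Qed.

Lemma int_lin (u v c : R) : u < v ->
  (\int[leb]_(x in `[u, v]) (x - c)%:E = (((v - c) * (v - c) - (u - c) * (u - c)) / 2)%:E)%E.
Proof.
move=> uv.
have cF : continuous (fun x : R => (x - c) * (x - c) / 2).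
  move=> x; apply: cvgM; last exact: cvg_cst.
  by apply: cvgM; apply: cvgB; (exact: cvg_id || exact: cvg_cst).
rewrite (@continuous_FTC2 _ _ (fun x => (x - c) * (x - c) / 2))//=.
- by rewrite -EFinD; congr (_%:E); lra.
- apply: continuous_subspaceT => x.
  by apply: cvgB; [exact: cvg_id|exact: cvg_cst].
- split.
  + by move=> x _; apply: derivableM.
  + exact: cvg_at_right_filter (cF u).
  + exact: cvg_at_left_filter (cF v).
- move=> x _. rewrite derive1E deriveM // deriveM // deriveB // derive_id derive_cst derive_cst !scaler0 subr0 !scaler1 add0r; rewrite /GRing.scale /=; by field.
Qed.

Lemma int_tm (u v c : R) : u < v ->
  (\int[leb]_x (tm `[u, v] c x)%:E = (((v - c) * (v - c) - (u - c) * (u - c)) / 2)%:E)%E.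
Proof. by move=> uv; rewrite -int_patch int_lin. Qed.

Lemma mtmR A c : measurable A -> measurable_fun [set: R] (tm A c).
Proof. by move=> mA; apply/measurable_EFinP; exact: mtm. Qed.

Lemma int_add (f g : R -> R) : measurable_fun [set: R] f -> measurable_fun [set: R] g ->
  (forall x, 0 <= f x) -> (forall x, 0 <= g x) ->
  (\int[leb]_x (f x + g x)%:E = \int[leb]_x (f x)%:E + \int[leb]_x (g x)%:E)%E.
Proof.
move=> mf mg f0 g0.
under eq_integral do rewrite EFinD.
apply: ge0_integralD => //.
- by move=> x _; rewrite lee_fin.
- exact/measurable_EFinP.
- by move=> x _; rewrite lee_fin.
- exact/measurable_EFinP.
Qed.

Lemma int_scale (k : R) (f : R -> R) : 0 <= k -> measurable_fun [set: R] f ->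
  (forall x, 0 <= f x) ->
  (\int[leb]_x (k * f x)%:E = k%:E * \int[leb]_x (f x)%:E)%E.
Proof.
move=> k0 mf f0.
under eq_integral do rewrite EFinM.
apply: ge0_integralZl_EFin => //.
- by move=> x _; rewrite lee_fin.
- exact/measurable_EFinP.
Qed.

Lemma int_le (f g : R -> R) : measurable_fun [set: R] f -> measurable_fun [set: R] g ->
  (forall x, 0 <= f x) -> (forall x, f x <= g x) ->
  (\int[leb]_x (f x)%:E <= \int[leb]_x (g x)%:E)%E.
Proof.
move=> mf mg f0 fg.
apply: ge0_le_integral => //.
- by move=> x _; rewrite lee_fin.
- exact/measurable_EFinP.
- exact/measurable_EFinP.
- by move=> x _; rewrite lee_fin.
Qed.

Lemma int_ge0 (f : R -> R) : (forall x, 0 <= f x) -> (0 <= \int[leb]_x (f x)%:E)%E.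
Proof. by move=> f0; apply: integral_ge0 => x _; rewrite lee_fin. Qed.

Lemma inS (s : schedule R) n x : (x \in [set t | s t = Some n]) = (s x == Some n).
Proof. by apply/idP/eqP => [/set_mem|/mem_set]. Qed.

Lemma work_mono (s : schedule R) n jb T T' : measurable [set t | s t = Some n] ->
  T <= T' -> (work s n jb T <= work s n jb T')%E.
Proof.
move=> mS TT; rewrite !work_tm; apply: int_le.
- by apply: mtmR; apply: measurableI => //; exact: measurable_itv.
- by apply: mtmR; apply: measurableI => //; exact: measurable_itv.
- move=> x; rewrite !tmE !in_setI !inS !mem_setE !in_itv /=; split_ifs; norm_hyps; lra.
- move=> x; rewrite !tmE !in_setI !inS !mem_setE !in_itv /=; split_ifs; norm_hyps; try lra.
Qed.

Lemma comp_near (s : schedule R) n jb d e : sched_measurable s -> 0 < e ->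
  (completion s n jb <= d%:E)%E -> ((wrk jb)%:E <= work s n jb (d + e))%E.
Proof.
move=> ms e0 cd.
have : (completion s n jb < (d + e)%:E)%E.
  by apply: (le_lt_trans cd); rewrite lte_fin; lra.
case/ereal_inf_lt => _ [T /= HT <-]; rewrite lte_fin => Tlt.
apply: (le_trans HT); apply: work_mono => //; lra.
Qed.

Lemma comp_le (s : schedule R) n jb d :
  ((wrk jb)%:E <= work s n jb d)%E -> (completion s n jb <= d%:E)%E.
Proof. by move=> H; apply: ereal_inf_lbound; exists d. Qed.

Definition sched3 (I1 I2 I3 : set R) (a b c : nat) : schedule R := fun t =>
  if t \in I1 then Some a else if t \in I2 then Some b
  else if t \in I3 then Some c else None.

Lemma mconst (m n : nat) : measurable [set _ : R | m = n].
Proof.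
case: (eqVneq m n) => [->|mn].
  by rewrite (_ : [set _ : R | n = n] = setT) //; apply/seteqP; split.
rewrite (_ : [set _ : R | m = n] = set0) //; apply/seteqP; split => // x /= mn'.
by rewrite mn' eqxx in mn.
Qed.

Lemma sched3_meas I1 I2 I3 a b c : measurable I1 -> measurable I2 -> measurable I3 ->
  sched_measurable (sched3 I1 I2 I3 a b c).
Proof.
move=> m1 m2 m3 n.
have -> : [set t | sched3 I1 I2 I3 a b c t = Some n] =
  (I1 `&` [set _ | a = n]) `|` ((I2 `\` I1) `&` [set _ | b = n]) `|`
  (((I3 `\` I1) `\` I2) `&` [set _ | c = n]).
  apply/seteqP; split => t /=; rewrite /sched3.
  - case: ifPn => h1; first by case=> <-; left; left; split => //; exact/set_mem.
    case: ifPn => h2; first by case=> <-; left; right; split => //; split;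
      [exact/set_mem|move=> /mem_set; exact/negP].
    case: ifPn => h3 // [<-]; right; split => //; split; [split|];
      [exact/set_mem|move=> /mem_set; exact/negP|move=> /mem_set; exact/negP].
  - case=> [[[h1 <-]|[[h2 h1] <-]]|[[[h3 h1] h2] <-]].
    + by rewrite mem_set.
    + have -> : (t \in I1) = false by apply/negP => /set_mem.
      by rewrite mem_set.
    + have -> : (t \in I1) = false by apply/negP => /set_mem.
      have -> : (t \in I2) = false by apply/negP => /set_mem.
      by rewrite mem_set.
apply: measurableU; first apply: measurableU.
- exact: measurableI (mconst _ _).
- by apply: measurableI (mconst _ _); exact: measurableD.
- by apply: measurableI (mconst _ _); apply: measurableD => //; exact: measurableD.
Qed.

Lemma lower (s : schedule R) n jb u v : u < v -> rel jb <= u ->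
  measurable [set t | s t = Some n] ->
  (forall x, tm `[u, v] (rel jb) x <=
     tm (`[rel jb, due jb] `&` [set t | s t = Some n]) (rel jb) x) ->
  wrk jb <= ((v - rel jb) * (v - rel jb) - (u - rel jb) * (u - rel jb)) / 2 ->
  (completion s n jb <= (due jb)%:E)%E.
Proof.
move=> uv ru mS hle hw; apply: comp_le; rewrite work_tm.
apply: (@le_trans _ _ (\int[leb]_x (tm `[u, v] (rel jb) x)%:E)%E).
  by rewrite int_tm // lee_fin.
apply: int_le.
- by apply: mtmR; exact: measurable_itv.
- by apply: mtmR; apply: measurableI => //; exact: measurable_itv.
- by move=> x; rewrite tmE mem_setE in_itv /=; case: ifP => // /andP[? ?]; lra.
- exact: hle.
Qed.

Definition ja : job R := Job 0 4 (17 / 5).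
Definition jbb : job R := Job 1 3 (1 / 2).
Definition jcP : job R := Job 2 3 (1 / 2).
Definition jcQ : job R := Job 3 4 (1 / 2).
Definition JS (c : job R) : stream R := fun n =>
  match n with 0 => Some ja | 1 => Some jbb | 2 => Some c | _ => None end%N.

Lemma JS_ok c : job_ok c -> stream_ok (JS c).
Proof.
move=> hc; split; first by exists 3%N => -[|[|[|n]]].
move=> [|[|[|n]]] jb //= [<-] //; rewrite /job_ok /=; split; lra.
Qed.

Definition sP0 := sched3 `[1, 2] `]2, 3] `]3, 4] 1 2 0.
Definition sQ0 := sched3 `[0, 27/10] `]27/10, 3] `]3, 4] 0 1 2.


Lemma sched3_cases I1 I2 I3 a b c t n : sched3 I1 I2 I3 a b c t = Some n ->
  (t \in I1 /\ n = a) \/ (t \in I2 /\ n = b) \/ (t \in I3 /\ n = c).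
Proof.
rewrite /sched3; case: ifP => h1; first by case=> <-; left.
case: ifP => h2; first by case=> <-; right; left.
by case: ifP => // h3 [<-]; right; right.
Qed.

Lemma sched3_1 I1 I2 I3 a b c t : t \in I1 -> sched3 I1 I2 I3 a b c t = Some a.
Proof. by rewrite /sched3 => ->. Qed.
Lemma sched3_2 I1 I2 I3 a b c t : t \notin I1 -> t \in I2 -> sched3 I1 I2 I3 a b c t = Some b.
Proof. by rewrite /sched3 => /negbTE -> ->. Qed.
Lemma sched3_3 I1 I2 I3 a b c t : t \notin I1 -> t \notin I2 -> t \in I3 ->
  sched3 I1 I2 I3 a b c t = Some c.
Proof. by rewrite /sched3 => /negbTE -> /negbTE -> ->. Qed.

Lemma lower_pw (s : schedule R) n r d u v x : r <= u -> v <= d ->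
  (x \in `[u, v]%classic -> s x = Some n) ->
  tm `[u, v] r x <= tm (`[r, d] `&` [set t | s t = Some n]) r x.
Proof.
move=> ru vd hs; rewrite !tmE in_setI inS.
case: ifP => hx.
  have := hx; rewrite mem_setE in_itv /= => /andP[h1 h2].
  rewrite (hs hx) eqxx andbT.
  have -> : x \in `[r, d]%classic by rewrite mem_setE in_itv /=; apply/andP; split; lra.
  by [].
case: ifP => //; rewrite mem_setE in_itv /= => /andP[/andP[? ?] _]; lra.
Qed.

Lemma itvcc (u v x : R) : (x \in `[u, v]%classic) = (u <= x <= v).
Proof. by rewrite mem_setE in_itv. Qed.
Lemma itvoc (u v x : R) : (x \in `]u, v]%classic) = (u < x <= v).
Proof. by rewrite mem_setE in_itv. Qed.
Lemma itvco (u v x : R) : (x \in `[u, v[%classic) = (u <= x < v).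
Proof. by rewrite mem_setE in_itv. Qed.

Ltac memtac := rewrite ?itvcc ?itvoc ?itvco /=;
  first [ apply/negP => /andP[? ?]; lra | apply/andP; split; lra ].

Lemma feasP : feasible (JS jcP).
Proof.
exists sP0; split; [|split].
- by apply: sched3_meas; exact: measurable_itv.
- move=> t n /sched3_cases [[h ->]|[[h ->]|[h ->]]]; eexists; (split; first reflexivity);
    move: h; rewrite ?itvcc ?itvoc /= => /andP[? ?]; apply/andP; split; lra.
- have mS : sched_measurable sP0 by apply: sched3_meas; exact: measurable_itv.
  move=> [|[|[|n]]] jb //= [<-].
  + apply: (@lower _ _ _ (301/100) 4) => //=; try lra.
    move=> x; apply: lower_pw => /=; [lra|lra|].
    move=> hx; move: (hx); rewrite itvcc => /andP[? ?].
    by apply: sched3_3; memtac.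
  + apply: (@lower _ _ _ 1 2) => //=; try lra.
    move=> x; apply: lower_pw => /=; [lra|lra|].
    by move=> hx; apply: sched3_1.
  + apply: (@lower _ _ _ 2 3) => //=; try lra.
    move=> x; rewrite !tmE. case: ifP => hx; last first.
      rewrite in_setI; case: ifP => // /andP[]; rewrite itvcc => /andP[? ?] _; lra.
    move: (hx); rewrite itvcc => /andP[? ?].
    case: (eqVneq x 2) => [->|x2]; first by rewrite subrr; case: ifP => //; lra.
    rewrite in_setI inS /sP0 (@sched3_2 _ _ _ _ _ _ x); first by rewrite eqxx hx.
    all: memtac.
Qed.

Lemma feasQ : feasible (JS jcQ).
Proof.
exists sQ0; split; [|split].
- by apply: sched3_meas; exact: measurable_itv.
- move=> t n /sched3_cases [[h ->]|[[h ->]|[h ->]]]; eexists; (split; first reflexivity);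
    move: h; rewrite ?itvcc ?itvoc /= => /andP[? ?]; apply/andP; split; lra.
- have mS : sched_measurable sQ0 by apply: sched3_meas; exact: measurable_itv.
  move=> [|[|[|n]]] jb //= [<-].
  + apply: (@lower _ _ _ 0 (27/10)) => //=; try lra.
    move=> x; apply: lower_pw => /=; [lra|lra|].
    by move=> hx; apply: sched3_1.
  + apply: (@lower _ _ _ (271/100) 3) => //=; try lra.
    move=> x; apply: lower_pw => /=; [lra|lra|].
    move=> hx; move: (hx); rewrite itvcc => /andP[? ?].
    by apply: sched3_2; memtac.
  + apply: (@lower _ _ _ 3 4) => //=; try lra.
    move=> x; rewrite !tmE. case: ifP => hx; last first.
      rewrite in_setI; case: ifP => // /andP[]; rewrite itvcc => /andP[? ?] _; lra.
    move: (hx); rewrite itvcc => /andP[? ?].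
    case: (eqVneq x 3) => [->|x3]; first by rewrite subrr; case: ifP => //; lra.
    rewrite in_setI inS /sQ0 (@sched3_3 _ _ _ _ _ _ x); first by rewrite eqxx hx.
    all: memtac.
Qed.
End S.

Section PW.
Variable R : realType.
Local Notation ee := (1/(10*10*10*10*10*10) : R).
Local Notation KK := (10*10*10+1 : R).
Local Notation th := (1/(10*10*10) : R).
Local Notation LL := (2*10+1 : R).
Local Notation K2 := (6*10+1 : R).
Local Notation th2 := (1/(2*10) : R).


Lemma tm_co_ge0 (u v c x : R) : c <= u -> 0 <= tm `[u, v[ c x.
Proof. move=> cu; rewrite tmE itvco; case: ifP => // /andP[? ?]; lra. Qed.
Lemma tm_cc_ge0 (u v c x : R) : c <= u -> 0 <= tm `[u, v] c x.
Proof. move=> cu; rewrite tmE itvcc; case: ifP => // /andP[? ?]; lra. Qed.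

Lemma tmS_cc (s : schedule R) n (u v c x : R) :
  tm (`[u, v] `&` [set t | s t = Some n]) c x = if s x == Some n then tm `[u, v] c x else 0.
Proof. by rewrite !tmE in_setI inS; case: (s x == Some n); rewrite ?andbT ?andbF. Qed.
Lemma tmS_co (s : schedule R) n (u v c x : R) :
  tm (`[u, v[ `&` [set t | s t = Some n]) c x = if s x == Some n then tm `[u, v[ c x else 0.
Proof. by rewrite !tmE in_setI inS; case: (s x == Some n); rewrite ?andbT ?andbF. Qed.

Definition rhsP (x : R) := KK * tm `[2, 3 + ee] 2 x + tm `[2, 2 + th] 1 x.

Lemma rhsP_ge0 x : 0 <= rhsP x.
Proof. by rewrite /rhsP; apply: addr_ge0; [apply: mulr_ge0; [lra|]|]; apply: tm_cc_ge0; lra. Qed.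

Lemma Pb x : tm `[1, 3 + ee] 1 x <= tm `[1, 2[ 1 x + rhsP x.
Proof.
rewrite /rhsP !tmE !itvcc !itvco; split_ifs; norm_hyps; lra.
Qed.

Lemma Pc x : KK * tm `[2, 3 + ee] 2 x <= rhsP x.
Proof.
rewrite /rhsP; have := @tm_cc_ge0 2 (2 + th) 1 x; lra.
Qed.

Lemma Ppw (sP : schedule R) x :
  tm (`[1, 3 + ee] `&` [set t | sP t = Some 1%N]) 1 x
   + KK * tm (`[2, 3 + ee] `&` [set t | sP t = Some 2%N]) 2 x <=
  tm (`[1, 2[ `&` [set t | sP t = Some 1%N]) 1 x + rhsP x.
Proof.
rewrite !tmS_cc tmS_co.
have := rhsP_ge0 x; have := Pb x; have := Pc x.
case: (sP x) => [[|[|[|k]]]|] /=; lra.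
Qed.

Definition rhsQ (x : R) := tm `[0, 1 + th2] 0 x + (LL * tm `[1, 2] 1 x +
   (tm `[2, 3 + th2] 0 x + K2 * tm `[3, 4 + ee] 3 x)).

Lemma rhsQ_ge0 x : 0 <= rhsQ x.
Proof.
rewrite /rhsQ; have := @tm_cc_ge0 0 (1 + th2) 0 x; have := @tm_cc_ge0 1 2 1 x.
have := @tm_cc_ge0 2 (3 + th2) 0 x; have := @tm_cc_ge0 3 (4 + ee) 3 x; lra.
Qed.

Lemma Qa x : tm `[0, 4 + ee] 0 x <= rhsQ x.
Proof. rewrite /rhsQ !tmE !itvcc; split_ifs; norm_hyps; lra. Qed.

Lemma Qb x : LL * tm `[1, 2[ 1 x <= rhsQ x.
Proof.
have : tm `[1, 2[ 1 x <= tm `[1, 2] 1 x.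
  rewrite !tmE itvcc itvco; split_ifs; norm_hyps; lra.
rewrite /rhsQ; have := @tm_cc_ge0 0 (1 + th2) 0 x; have := @tm_cc_ge0 1 2 1 x.
have := @tm_cc_ge0 2 (3 + th2) 0 x; have := @tm_cc_ge0 3 (4 + ee) 3 x; lra.
Qed.

Lemma Qc x : K2 * tm `[3, 4 + ee] 3 x <= rhsQ x.
Proof.
rewrite /rhsQ; have := @tm_cc_ge0 0 (1 + th2) 0 x; have := @tm_cc_ge0 1 2 1 x.
have := @tm_cc_ge0 2 (3 + th2) 0 x; lra.
Qed.

Lemma Qpw (sP sQ : schedule R) x : (forall t, t < 2 -> sQ t = sP t) ->
  tm (`[0, 4 + ee] `&` [set t | sQ t = Some 0%N]) 0 x
   + (LL * tm (`[1, 2[ `&` [set t | sP t = Some 1%N]) 1 x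
   + K2 * tm (`[3, 4 + ee] `&` [set t | sQ t = Some 2%N]) 3 x) <= rhsQ x.
Proof.
move=> eqQP; rewrite !tmS_cc tmS_co.
have := rhsQ_ge0 x; have := Qa x; have := Qb x; have := Qc x.
have [x2|x2] := ltP x 2.
  rewrite (eqQP x x2).
  case: (sP x) => [[|[|[|k]]]|] /=; lra.
have -> : tm `[1, 2[ 1 x = 0 by rewrite tmE itvco; case: ifP => // /andP[_]; lra.
by case: (sP x) => [[|[|[|k]]]|]; case: (sQ x) => [[|[|[|k']]]|] /=; lra.
Qed.
End PW.

Section M.
Variable R : realType.
Local Notation leb := (@lebesgue_measure R).
Local Notation ee := (1/(10*10*10*10*10*10) : R).
Local Notation KK := (10*10*10+1 : R).
Local Notation th := (1/(10*10*10) : R).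
Local Notation LL := (2*10+1 : R).
Local Notation K2 := (6*10+1 : R).
Local Notation th2 := (1/(2*10) : R).

Lemma mK (k : R) (f : R -> R) : measurable_fun [set: R] f ->
  measurable_fun [set: R] (fun x => k * f x).
Proof. by move=> mf; apply: measurable_funM => //; exact: measurable_cst. Qed.

Lemma mItv (S : set R) u v : measurable S -> measurable (`[u, v] `&` S).
Proof. by move=> mS; apply: measurableI => //; exact: measurable_itv. Qed.
Lemma mItvo (S : set R) u v : measurable S -> measurable (`[u, v[ `&` S).
Proof. by move=> mS; apply: measurableI => //; exact: measurable_itv. Qed.

Lemma tmI_ge0 (S : set R) u v c x : c <= u -> 0 <= tm (`[u, v] `&` S) c x.
Proof. move=> cu; rewrite tmE in_setI itvcc; case: ifP => // /andP[/andP[? ?] _]; lra. Qed.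
Lemma tmIo_ge0 (S : set R) u v c x : c <= u -> 0 <= tm (`[u, v[ `&` S) c x.
Proof. move=> cu; rewrite tmE in_setI itvco; case: ifP => // /andP[/andP[? ?] _]; lra. Qed.

Lemma mT (u v c : R) : measurable_fun [set: R] (tm `[u, v] c).
Proof. by apply: mtmR; exact: measurable_itv. Qed.

Lemma int_rhsP : (\int[leb]_x (rhsP x)%:E =
  (KK * (((3 + ee - 2) * (3 + ee - 2) - (2 - 2) * (2 - 2)) / 2)
       + ((2 + th - 1) * (2 + th - 1) - (2 - 1) * (2 - 1)) / 2)%:E)%E.
Proof.
rewrite /rhsP int_add; first last.
- by move=> x; apply: tm_cc_ge0; lra.
- by move=> x; apply: mulr_ge0; [lra|]; apply: tm_cc_ge0; lra.
- exact: mT.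
- by apply: mK; exact: mT.
rewrite int_scale; first last.
- by move=> x; apply: tm_cc_ge0; lra.
- exact: mT.
- lra.
by rewrite !int_tm ?EFinD ?EFinM //; lra.
Qed.

Lemma Pstep (sP : schedule R) : sched_measurable sP ->
  ((1/2)%:E <= \int[leb]_x (tm (`[1, 3 + ee] `&` [set t | sP t = Some 1%N]) 1 x)%:E)%E ->
  ((1/2)%:E <= \int[leb]_x (tm (`[2, 3 + ee] `&` [set t | sP t = Some 2%N]) 2 x)%:E)%E ->
  exists X : R,
    (\int[leb]_x (tm (`[1, 2[ `&` [set t | sP t = Some 1%N]) 1 x)%:E = X%:E)%E /\
    1/2 + KK * (1/2) <= X + (KK * (((3 + ee - 2) * (3 + ee - 2) - (2 - 2) * (2 - 2)) / 2)
       + ((2 + th - 1) * (2 + th - 1) - (2 - 1) * (2 - 1)) / 2).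
Proof.
move=> ms hb hc.
have mb := ms 1%N; have mc := ms 2%N.
have PI : (\int[leb]_x (tm (`[1, 3 + ee] `&` [set t | sP t = Some 1%N]) 1 x
   + KK * tm (`[2, 3 + ee] `&` [set t | sP t = Some 2%N]) 2 x)%:E <=
  \int[leb]_x (tm (`[1, 2[ `&` [set t | sP t = Some 1%N]) 1 x + rhsP x)%:E)%E.
  apply: int_le.
  - apply: measurable_funD; first by apply: mtmR; exact: mItv.
    by apply: mK; apply: mtmR; exact: mItv.
  - apply: measurable_funD; first by apply: mtmR; exact: mItvo.
    by rewrite /rhsP; apply: measurable_funD; [apply: mK|]; exact: mT.
  - move=> x; apply: addr_ge0; first by apply: tmI_ge0; lra.
    by apply: mulr_ge0; [lra|]; apply: tmI_ge0; lra.
  - move=> x; exact: Ppw.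
rewrite int_add in PI; first last.
- by move=> x; apply: mulr_ge0; [lra|]; apply: tmI_ge0; lra.
- by move=> x; apply: tmI_ge0; lra.
- by apply: mK; apply: mtmR; exact: mItv.
- by apply: mtmR; exact: mItv.
rewrite int_scale in PI; first last.
- by move=> x; apply: tmI_ge0; lra.
- by apply: mtmR; exact: mItv.
- lra.
rewrite int_add in PI; first last.
- exact: rhsP_ge0.
- by move=> x; apply: tmIo_ge0; lra.
- by rewrite /rhsP; apply: measurable_funD; [apply: mK|]; exact: mT.
- by apply: mtmR; exact: mItvo.
rewrite int_rhsP in PI.
set X := (\int[leb]_x (tm (`[1, 2[ `&` _) 1 x)%:E)%E in PI *.
have X0 : (0 <= X)%E by apply: int_ge0 => x; apply: tmIo_ge0; lra.
have XL : (X <= (1/2)%:E)%E.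
  apply: (@le_trans _ _ (\int[leb]_x (tm `[1, 2] 1 x)%:E)%E).
    apply: int_le.
    - by apply: mtmR; exact: mItvo.
    - exact: mT.
    - by move=> x; apply: tmIo_ge0; lra.
    - move=> x; rewrite tmS_co; case: ifP => _; last by apply: tm_cc_ge0; lra.
      rewrite !tmE itvco itvcc; split_ifs; norm_hyps; lra.
  by rewrite int_tm; [rewrite lee_fin; lra|lra].
move: X0 XL PI; case: X => [x| |] // X0 XL PI.
exists x; split => //.
have : ((1/2 + KK * (1/2))%:E <= x%:E + (KK * (((3 + ee - 2) * (3 + ee - 2) - (2 - 2) * (2 - 2)) / 2)
       + ((2 + th - 1) * (2 + th - 1) - (2 - 1) * (2 - 1)) / 2)%:E)%E.
  apply: le_trans PI; rewrite EFinD; apply: leeD; first exact: hb.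
  rewrite EFinM; apply: (lee_wpmul2l _ hc); rewrite lee_fin; lra.
by rewrite -EFinD lee_fin.
Qed.

Lemma int_rhsQ : (\int[leb]_x (rhsQ x)%:E =
  (((1 + th2 - 0) * (1 + th2 - 0) - (0 - 0) * (0 - 0)) / 2 +
   (LL * (((2 - 1) * (2 - 1) - (1 - 1) * (1 - 1)) / 2) +
   (((3 + th2 - 0) * (3 + th2 - 0) - (2 - 0) * (2 - 0)) / 2 +
    K2 * (((4 + ee - 3) * (4 + ee - 3) - (3 - 3) * (3 - 3)) / 2))))%:E)%E.
Proof.
have g0 (u v c x : R) : c <= u -> 0 <= tm `[u, v] c x by move=> *; exact: tm_cc_ge0.
rewrite /rhsQ int_add; first last.
- move=> x; apply: addr_ge0; first by apply: mulr_ge0; [lra|]; apply: g0; lra.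
  by apply: addr_ge0; [|apply: mulr_ge0; [lra|]]; apply: g0; lra.
- by move=> x; apply: g0; lra.
- by apply: measurable_funD; [apply: mK|apply: measurable_funD; [|apply: mK]]; exact: mT.
- exact: mT.
rewrite int_add; first last.
- by move=> x; apply: addr_ge0; [|apply: mulr_ge0; [lra|]]; apply: g0; lra.
- by move=> x; apply: mulr_ge0; [lra|]; apply: g0; lra.
- by apply: measurable_funD; [|apply: mK]; exact: mT.
- by apply: mK; exact: mT.
rewrite int_add; first last.
- by move=> x; apply: mulr_ge0; [lra|]; apply: g0; lra.
- by move=> x; apply: g0; lra.
- by apply: mK; exact: mT.
- exact: mT.
rewrite !int_scale; first last.
- by move=> x; apply: g0; lra.
- exact: mT.
- lra.
- by move=> x; apply: g0; lra.
- exact: mT.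
- lra.
rewrite !int_tm; [by rewrite -!EFinM -!EFinD|lra..].
Qed.

Lemma Qstep (sP sQ : schedule R) (X : R) : sched_measurable sP -> sched_measurable sQ ->
  (forall t, t < 2 -> sQ t = sP t) ->
  (\int[leb]_x (tm (`[1, 2[ `&` [set t | sP t = Some 1%N]) 1 x)%:E = X%:E)%E ->
  ((17/5)%:E <= \int[leb]_x (tm (`[0, 4 + ee] `&` [set t | sQ t = Some 0%N]) 0 x)%:E)%E ->
  ((1/2)%:E <= \int[leb]_x (tm (`[3, 4 + ee] `&` [set t | sQ t = Some 2%N]) 3 x)%:E)%E ->
  17/5 + (LL * X + K2 * (1/2)) <=
  ((1 + th2 - 0) * (1 + th2 - 0) - (0 - 0) * (0 - 0)) / 2 +
   (LL * (((2 - 1) * (2 - 1) - (1 - 1) * (1 - 1)) / 2) +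
   (((3 + th2 - 0) * (3 + th2 - 0) - (2 - 0) * (2 - 0)) / 2 +
    K2 * (((4 + ee - 3) * (4 + ee - 3) - (3 - 3) * (3 - 3)) / 2))).
Proof.
move=> msP msQ eqQP hX ha hc.
have ma := msQ 0%N; have mb := msP 1%N; have mc := msQ 2%N.
have QI : (\int[leb]_x (tm (`[0, 4 + ee] `&` [set t | sQ t = Some 0%N]) 0 x
   + (LL * tm (`[1, 2[ `&` [set t | sP t = Some 1%N]) 1 x
   + K2 * tm (`[3, 4 + ee] `&` [set t | sQ t = Some 2%N]) 3 x))%:E <=
  \int[leb]_x (rhsQ x)%:E)%E.
  apply: int_le.
  - apply: measurable_funD; first by apply: mtmR; exact: mItv.
    by apply: measurable_funD; apply: mK; apply: mtmR; [exact: mItvo|exact: mItv].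
  - rewrite /rhsQ.
    by apply: measurable_funD; [|apply: measurable_funD; [apply: mK|apply: measurable_funD; [|apply: mK]]]; exact: mT.
  - move=> x; apply: addr_ge0; first by apply: tmI_ge0; lra.
    by apply: addr_ge0; apply: mulr_ge0; (try lra); [apply: tmIo_ge0|apply: tmI_ge0]; lra.
  - move=> x; exact: Qpw.
rewrite int_rhsQ in QI.
rewrite int_add in QI; first last.
- by move=> x; apply: addr_ge0; apply: mulr_ge0; (try lra); [apply: tmIo_ge0|apply: tmI_ge0]; lra.
- by move=> x; apply: tmI_ge0; lra.
- by apply: measurable_funD; apply: mK; apply: mtmR; [exact: mItvo|exact: mItv].
- by apply: mtmR; exact: mItv.
rewrite int_add in QI; first last.
- by move=> x; apply: mulr_ge0; [lra|]; apply: tmI_ge0; lra.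
- by move=> x; apply: mulr_ge0; [lra|]; apply: tmIo_ge0; lra.
- by apply: mK; apply: mtmR; exact: mItv.
- by apply: mK; apply: mtmR; exact: mItvo.
rewrite !int_scale in QI; [|by first [ move=> x; apply: tmI_ge0; lra | move=> x; apply: tmIo_ge0; lra | apply: mtmR; exact: mItv | apply: mtmR; exact: mItvo | lra ]..].
rewrite hX in QI.
rewrite -lee_fin; apply: le_trans QI.
rewrite EFinD; apply: leeD; first exact: ha.
rewrite EFinD EFinM; apply: leeD => //.
rewrite EFinM; apply: (lee_wpmul2l _ hc); rewrite lee_fin; lra.
Qed.
End M.

Theorem theorem3 (R : realType) (A : algorithm R) :
  online A ->
  exists J : stream R,
    stream_ok J /\ feasible J /\
    exists n jb, J n = Some jb /\ ((due jb)%:E < completion (A J) n jb)%E.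
Proof.
move=> [Hon [Hms Hrel]].
have okP : stream_ok (JS (jcP R)) by apply: JS_ok; rewrite /job_ok /=; split; lra.
have okQ : stream_ok (JS (jcQ R)) by apply: JS_ok; rewrite /job_ok /=; split; lra.
case: (pselect (exists n jb, JS (jcP R) n = Some jb /\
   ((due jb)%:E < completion (A (JS (jcP R))) n jb)%E)) => [W|nWP].
  by exists (JS (jcP R)); split; [|split; [exact: feasP R|]].
case: (pselect (exists n jb, JS (jcQ R) n = Some jb /\
   ((due jb)%:E < completion (A (JS (jcQ R))) n jb)%E)) => [W|nWQ].
  by exists (JS (jcQ R)); split; [|split; [exact: feasQ R|]].
exfalso.
have allP n jb : JS (jcP R) n = Some jb -> (completion (A (JS (jcP R))) n jb <= (due jb)%:E)%E.
  by move=> H; rewrite leNgt; apply/negP => Hlt; apply: nWP; exists n, jb.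
have allQ n jb : JS (jcQ R) n = Some jb -> (completion (A (JS (jcQ R))) n jb <= (due jb)%:E)%E.
  by move=> H; rewrite leNgt; apply/negP => Hlt; apply: nWQ; exists n, jb.
have eqQP t : t < 2 -> A (JS (jcQ R)) t = A (JS (jcP R)) t.
  move=> t2; apply: Hon; apply/funext => n; rewrite /released_by.
  case: n => [|[|[|n]]] //=.
  have -> : (3 <= t) = false by apply/negbTE; rewrite -ltNge; lra.
  have -> : (2 <= t) = false by apply/negbTE; rewrite -ltNge; lra.
  by [].
have e0 : (0:R) < 1/(10*10*10*10*10*10) by lra.
have hbP := comp_near (Hms _) e0 (allP 1%N (jbb R) erefl).
have hcP := comp_near (Hms _) e0 (allP 2%N (jcP R) erefl).
have haQ := comp_near (Hms _) e0 (allQ 0%N (ja R) erefl).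
have hcQ := comp_near (Hms _) e0 (allQ 2%N (jcQ R) erefl).
rewrite work_tm in hbP; rewrite work_tm in hcP; rewrite work_tm in haQ; rewrite work_tm in hcQ.
have [X [hX PX]] := Pstep (Hms _) hbP hcP.
have QX := Qstep (Hms _) (Hms _) eqQP hX haQ hcQ.
lra.
Qed.
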